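(* Let $A^{I_1,\dots,I_s}_{\sigma_1,\dots,\sigma_s,i_{s+1},\dots,i_{n-1}}$ ($s=0,\dots,n-1$, $|I_l|=r-1$) be smooth functions on $V^{r-1}$ with the symmetry property described in the context, let $\mathcal{L}$ be defined by $$\mathcal{L}^{I_1,\dots,I_s}_{\sigma_1,\dots,\sigma_s,i_{s+1},\dots,i_n}=\sum_{k=1}^{s}(-1)^{k-1}\partial^{I_k}_{\sigma_k}A^{I_1,\dots,\widehat{I_k},\dots,I_s}_{\sigma_1,\dots,\widehat{\sigma_k},\dots,\sigma_s,i_{s+1},\dots,i_n}+\sum_{k=s+1}^{n}(-1)^{k-1}d_{i_k}A^{I_1,\dots,I_s}_{\sigma_1,\dots,\sigma_s,i_{s+1},\dots,\widehat{i_k},\dots,i_n}$$ ($d_j=d^{r-1}_j$), and let $L=\sum_{s=0}^{n}\frac{1}{s!(n-s)!}\sum_{|I_1|,\dots,|I_s|=r-1}\mathcal{L}^{I_1,\dots,I_s}_{\sigma_1,\dots,\sigma_s,i_{s+1},\dots,i_n}\mathcal{J}^{\sigma_1,\dots,\sigma_s,i_{s+1},\dots,i_n}_{I_1,\dots,I_s}$. Then there exist smooth functions $V^j$, $j=1,\dots,n$, on $V^r$ such that $$L=\sum_{j=1}^n d_jV^j .$$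
   Context: $\pi:Y\to X$ is a fibre bundle, $\dim X=n$, fibre dimension $m$, with adapted chart $(V,\psi)$, $\psi=(x^i,y^\sigma)$, and associated charts $(V^k,\psi^k)$ on jet prolongations $J^kY$ with coordinates $x^i,y^\sigma_J$, $|J|\le k$ ($y^\sigma_J$ symmetric in $J$). $\partial^J_\sigma=\frac{r_1!\cdots r_n!}{|J|!}\partial/\partial y^\sigma_J$ ($r_l$ the multiplicity of $l$ in $J$); sums over multi-indices run over all ordered tuples and repeated indices are summed. Formal derivatives: $d_i^{p}=\partial/\partial x^i+\sum_{k=0}^{p-1}y^\sigma_{ij_1\dots j_k}\partial^{j_1\dots j_k}_\sigma$. Hyper-Jacobians: $\mathcal{J}^{\sigma_1,\dots,\sigma_s,i_{s+1},\dots,i_n}_{I_1,\dots,I_s}=\sum_{i_1,\dots,i_s}\varepsilon^{i_1\dots i_n}\prod_{l=1}^{s}y^{\sigma_l}_{I_li_l}$. Symmetry property: $A^{I_{P(1)},\dots,I_{P(s)}}_{\sigma_{P(1)},\dots,\sigma_{P(s)},i_{Q(s+1)},\dots,i_{Q(q)}}=(-1)^{|P|+|Q|}A^{I_1,\dots,I_s}_{\sigma_1,\dots,\sigma_s,i_{s+1},\dots,i_q}$ for all permutations $P$ of $\{1,\dots,s\}$ and $Q$ of $\{s+1,\dots,q\}$. *)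

(* Defs.v *)
From HB Require Import structures.
From mathcomp Require Import all_boot all_order all_algebra all_fingroup.
From mathcomp Require Import all_classical all_reals.
From mathcomp Require Import topology normedtype derive.
Set Implicit Arguments. Unset Strict Implicit. Unset Printing Implicit Defensive.
Import Order.TTheory GRing.Theory Num.Theory.
Import numFieldNormedType.Exports.
Local Open Scope ring_scope.
Local Open Scope classical_set_scope.

(* Coordinates of the associated chart (V^k, psi^k) on J^k Y.          *)
(* n = dim X, m = fibre dimension.                                     *)
(* A symmetric multi-index J = (j_1..j_p), p <= k, is recorded by its  *)
(* multiplicities r_l (l < n).                                          *)
Definition mi (n k : nat) :=
  {c : {ffun 'I_n -> 'I_k.+1} | (\sum_(l < n) (c l : nat) <= k)%N}.

Definition mi0 (n k : nat) : mi n k.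
Proof. by exists [ffun => ord0]; rewrite big1 // => l _; rewrite ffunE. Defined.

(* coordinate labels: x^i (inl i) and y^sigma_J (inr (sigma, J)) *)
Definition coord (n m k : nat) := ('I_n + ('I_m * mi n k))%type.

(* the multi-index of an ordered tuple J (meaningful when size J <= k) *)
Definition mi_of (n k : nat) (J : seq 'I_n) : mi n k :=
  insubd (mi0 n k) [ffun l => inord (count_mem l J)].

Definition xc (n m k : nat) (i : 'I_n) : coord n m k := inl i.
Definition yc (n m k : nat) (s : 'I_m) (J : seq 'I_n) : coord n m k :=
  inr (s, mi_of k J).

(* points of psi^k(V^k) ⊂ R^N, N = number of coordinates *)
Definition pt (R : realType) (n m k : nat) := 'rV[R]_#|{: coord n m k}|.

Definition cv (R : realType) n m k (p : pt R n m k) (c : coord n m k) : R :=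
  p ord0 (enum_rank c).

Definition ev (R : realType) n m k (c : coord n m k) : pt R n m k :=
  delta_mx ord0 (enum_rank c).

Definition emb_mi (n k l : nat) (J : mi n k) : mi n l :=
  insubd (mi0 n l) [ffun i => inord (val J i : nat)].
Definition emb (n m k l : nat) (c : coord n m k) : coord n m l :=
  match c with inl i => inl i | inr (s, J) => inr (s, emb_mi l J) end.

(* the jet projection pi^{l,k} : V^l -> V^k in coordinates (k <= l) *)
Definition projk (R : realType) n m k l (p : pt R n m l) : pt R n m k :=
  \row_j cv p (emb l (enum_val j)).

(* psi^k(V^k) = psi(V) x R^{...}: the points whose order-0 part lies in W *)
Definition domk (R : realType) n m k (W : set (pt R n m 0)) : set (pt R n m k) :=
  [set p | W (projk 0 p)].

Definition iterD (R : realType) N (es : seq 'I_N) (f : 'rV[R]_N -> R) :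
    'rV[R]_N -> R :=
  foldr (fun e g => 'D_(delta_mx ord0 e) g) f es.

Definition smooth_on (R : realType) N (U : set 'rV[R]_N) (f : 'rV[R]_N -> R) :=
  forall es : seq 'I_N, forall p, U p ->
    {for p, continuous (iterD es f)} /\
    forall e, derivable (iterD es f) p (delta_mx ord0 e).

Definition pd (R : realType) n m k (c : coord n m k) (f : pt R n m k -> R) :
    pt R n m k -> R :=
  fun p => 'D_(ev R c) f p.

Definition pdJ (R : realType) n m k (s : 'I_m) (J : seq 'I_n)
    (f : pt R n m k -> R) : pt R n m k -> R :=
  fun p => (\prod_(l < n) (count_mem l J)`!)%:R / (size J)`!%:R
           * pd (yc k s J) f p.

Definition fd (R : realType) n m k (i : 'I_n) (f : pt R n m k -> R) :
    pt R n m k.+1 -> R :=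
  fun p => pd (xc m k i) f (projk k p)
    + \sum_(a < k) \sum_(s : 'I_m) \sum_(J : a.-tuple 'I_n)
        cv p (yc k.+1 s (i :: tval J)) * pdJ s (tval J) f (projk k p).

Definition eps (R : realType) (n : nat) (t : seq 'I_n) : R :=
  \sum_(P : 'S_n) (map P (enum 'I_n) == t)%:R * (-1) ^+ P.

(* u runs over the triples (sigma_l, I_l, i_l), l = 1..s *)
(* (the I_l are multi-indices of length k-1, so I_l i_l has length k)    *)
Definition hjac (R : realType) n m k (sg : seq 'I_m) (I : seq (seq 'I_n))
    (i : seq 'I_n) (p : pt R n m k) : R :=
  \sum_(t : (size sg).-tuple 'I_n)
     eps R (tval t ++ i) *
     \prod_(u <- zip sg (zip I (tval t)))
        cv p (yc k u.1 (rcons u.2.1 u.2.2)).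

Definition dropi T (a : nat) (s : seq T) := take a s ++ drop a.+1 s.

Definition permt T s (P : 'S_s) (t : s.-tuple T) : s.-tuple T :=
  [tuple tnth t (P j) | j < s].

(* The family A is given as a function of (sigma_1..sigma_s), (I_1..I_s), *)
(* (i_{s+1}..i_{n-1}) with values functions on V^{r-1}, r = q.+1.         *)
Definition Afam (R : realType) n m q :=
  seq 'I_m -> seq (seq 'I_n) -> seq 'I_n -> pt R n m q -> R.

(* u runs over the pairs (k, (sigma_k, I_k)) resp. (k, i_k) *)
(* (function on V^r, r = q.+1), with s = size sg                          *)
Definition Lcal (R : realType) n m q (A : Afam R n m q)
    (sg : seq 'I_m) (I : seq (seq 'I_n)) (i : seq 'I_n) (p : pt R n m q.+1) : R :=
  \sum_(u <- zip (iota 0 (size sg)) (zip sg I)) (-1) ^+ u.1 *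
      pdJ u.2.1 u.2.2 (A (dropi u.1 sg) (dropi u.1 I) i) (projk q p)
  + \sum_(u <- zip (iota 0 (size i)) i) (-1) ^+ (size sg + u.1) *
      fd u.2 (A sg I (dropi u.1 i)) p.

Definition Lag (R : realType) n m q (A : Afam R n m q) (p : pt R n m q.+1) : R :=
  \sum_(s < n.+1) ((s`! * (n - s)`!)%:R)^-1 *
    \sum_(sg : s.-tuple 'I_m) \sum_(I : s.-tuple (q.-tuple 'I_n))
      \sum_(i : (n - s).-tuple 'I_n)
        Lcal A sg (map val I) i p * hjac sg (map val I) i p.

(* Main.v *)
Require Import Defs.
From Stdlib Require List.
From HB Require Import structures.
From mathcomp Require Import all_boot all_order all_algebra all_fingroup.
From mathcomp Require Import all_classical all_reals.
From mathcomp Require Import topology normedtype derive.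
Import Order.TTheory GRing.Theory Num.Theory.
Import numFieldNormedType.Exports.
Local Open Scope ring_scope.
Local Open Scope classical_set_scope.
Set Implicit Arguments. Unset Strict Implicit. Unset Printing Implicit Defensive.
From mathcomp Require Import ring.
From mathcomp Require Import zify.

Definition dl (R : realType) N (e : 'I_N) : 'rV[R]_N := delta_mx ord0 e.

Section Smooth.
Variables (R : realType) (N : nat).
Local Notation fn := ('rV[R]_N -> R).
Implicit Types (U : set 'rV[R]_N) (f g : fn).

Lemma big_In (T : Type) (r : seq T) (F G : T -> R) :
  (forall x, List.In x r -> F x = G x) -> \sum_(x <- r) F x = \sum_(x <- r) G x.
Proof.
elim: r => [|a r IH] H; first by rewrite !big_nil.
rewrite !big_cons H; last by left.
by rewrite IH // => x xr; apply: H; right.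
Qed.

Definition eqon U f g := forall p, U p -> f p = g p.

Lemma eqon_near U f g p : open U -> U p -> eqon U f g ->
  \forall x \near p, f x = g x.
Proof.
move=> oU Up fg.
have : nbhs p U by apply: open_nbhs_nbhs; split.
apply: filterS => x Ux; exact: fg.
Qed.

Lemma eqon_derive U f g p v : open U -> U p -> eqon U f g ->
  'D_v f p = 'D_v g p.
Proof. by move=> oU Up fg; apply: near_eq_derive; apply: eqon_near fg. Qed.

Lemma eqon_derivable U f g p v : open U -> U p -> eqon U f g ->
  derivable f p v -> derivable g p v.
Proof. by move=> oU Up fg; apply: near_eq_derivable; apply: eqon_near fg. Qed.

Lemma eqon_cont U f g p : open U -> U p -> eqon U f g ->
  {for p, continuous f} -> {for p, continuous g}.
Proof.
move=> oU Up fg cf.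
have e := eqon_near oU Up fg.
rewrite /prop_for /continuous_at -(fg p Up).
exact: cvg_trans (near_eq_cvg e) cf.
Qed.

Definition good U (F : fn -> Prop) :=
  (forall f, F f -> forall p, U p ->
     {for p, continuous f} /\ forall e, derivable f p (dl R e)) /\
  (forall f, F f -> forall e, exists g, F g /\ eqon U ('D_(dl R e) f) g).

Lemma iterD_cons e es f : Defs.iterD (e :: es) f = 'D_(dl R e) (Defs.iterD es f).
Proof. by []. Qed.

Lemma good_iter U F : open U -> good U F ->
  forall es f, F f -> exists g, F g /\ eqon U (Defs.iterD es f) g.
Proof.
move=> oU [_ hD]; elim=> [|e es IH] f Ff.
  by exists f; split => // p.
have [g [Fg fg]] := IH f Ff.
have [g' [Fg' gg']] := hD g Fg e.
exists g'; split => // p Up.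
rewrite iterD_cons -(gg' p Up).
exact: (eqon_derive _ oU Up fg).
Qed.

Lemma good_smooth U F : open U -> good U F -> forall f, F f -> smooth_on U f.
Proof.
move=> oU gF f Ff es p Up.
have [g [Fg fg]] := good_iter oU gF es Ff.
have [cg dg] := gF.1 g Fg p Up.
have gf : eqon U g (Defs.iterD es f) by move=> x Ux; rewrite fg.
split; first exact: eqon_cont gf cg.
move=> e; exact: eqon_derivable gf (dg e).
Qed.

Lemma iterD_rcons es e f : Defs.iterD (rcons es e) f = Defs.iterD es ('D_(dl R e) f).
Proof. by rewrite /Defs.iterD foldr_rcons. Qed.

Lemma sm_D U f e : smooth_on U f -> smooth_on U ('D_(dl R e) f).
Proof. by move=> sf es p Up; rewrite -iterD_rcons; apply: sf. Qed.

Lemma sm_cont U f p : smooth_on U f -> U p -> {for p, continuous f}.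
Proof. by move=> sf Up; exact: (sf [::] p Up).1. Qed.

Lemma sm_der U f p e : smooth_on U f -> U p -> derivable f p (dl R e).
Proof. by move=> sf Up; exact: (sf [::] p Up).2. Qed.

Lemma sm_ext U f g : (forall x, f x = g x) -> smooth_on U f -> smooth_on U g.
Proof. by move=> fg; have -> : f = g by apply/funext. Qed.

Lemma sm_cst U c : open U -> smooth_on U (fun _ => c).
Proof.
move=> oU; apply: (@good_smooth U (fun f => exists c, f = fun _ => c)) => //;
  last by exists c.
split.
- move=> f [c' ->] p Up; split; first exact: cst_continuous.
  move=> e; exact: derivable_cst.
- move=> f [c' ->] e; exists (fun _ => 0); split; first by exists 0.
  by move=> p Up; rewrite derive_cst.
Qed.

Lemma derive_coord (p v : 'rV[R]_N) k :
  derivable (fun x : 'rV[R]_N => x ord0 k) p v /\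
  'D_v (fun x : 'rV[R]_N => x ord0 k) p = v ord0 k.
Proof.
split.
  have := (@derivable_mxP R _ 1 N (@id 'rV[R]_N) p v).
  case => + _. move=> H; apply: H. exact: derivable_id.
have := @derive_mx R _ 1 N (@id 'rV[R]_N) p v (@derivable_id _ _ p v).
rewrite derive_id => /matrixP /(_ ord0 k); rewrite mxE => ->.
by [].
Qed.

Lemma sm_coord U k : open U -> smooth_on U (fun x => x ord0 k).
Proof.
move=> oU; apply: (@good_smooth U
   (fun f => (exists c, f = fun _ => c) \/ f = fun x => x ord0 k)) => //;
  last by right.
split.
- move=> f [[c' ->]|->] p Up.
    split; first exact: cst_continuous.
    move=> e; exact: derivable_cst.
  split; first exact: coord_continuous.
  by move=> e; case: (derive_coord p (dl R e) k).
- move=> f [[c' ->]|->] e.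
    exists (fun _ => 0); split; first by left; exists 0.
    by move=> p Up; rewrite derive_cst.
  exists (fun _ => dl R e ord0 k); split; first by left; exists (dl R e ord0 k).
  by move=> p Up; case: (derive_coord p (dl R e) k).
Qed.

Lemma cont_add f g p : {for p, continuous f} -> {for p, continuous g} ->
  {for p, continuous (fun x => f x + g x)}.
Proof. by move=> cf cg; apply: (cvgD cf cg). Qed.

Lemma cont_mul f g p : {for p, continuous f} -> {for p, continuous g} ->
  {for p, continuous (fun x => f x * g x)}.
Proof. by move=> cf cg; apply: (cvgM cf cg). Qed.

Lemma derive_bigsum (T : Type) (r : seq T) (F : T -> fn) p v :
  (forall i, List.In i r -> derivable (F i) p v) ->
  derivable (fun x => \sum_(i <- r) F i x) p v /\
  'D_v (fun x => \sum_(i <- r) F i x) p = \sum_(i <- r) 'D_v (F i) p.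
Proof.
elim: r => [|a r IH] H.
  have -> : (fun x => \sum_(i <- [::]) F i x) = (fun _ => 0 : R).
    by apply/funext => x; rewrite big_nil.
  by rewrite big_nil derive_cst; split => //; exact: derivable_cst.
have -> : (fun x => \sum_(i <- a :: r) F i x) =
   F a + (fun x => \sum_(i <- r) F i x).
  by apply/funext => x; rewrite big_cons.
have [d1 e1] := IH (fun i ri => H i (or_intror ri)).
have d0 := H a (or_introl erefl).
split; first exact: (@derivableD R _ _ (F a) (fun x => \sum_(i <- r) F i x) p v d0 d1).
by rewrite (@deriveD R _ _ (F a) (fun x => \sum_(i <- r) F i x) p v d0 d1) big_cons e1.
Qed.

Lemma derive_mul f g p v : derivable f p v -> derivable g p v ->
  derivable (fun x => f x * g x) p v /\
  'D_v (fun x => f x * g x) p = 'D_v f p * g p + f p * 'D_v g p.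
Proof.
move=> df dg.
have -> : (fun x => f x * g x) = f * g by apply/funext.
split; first exact: (@derivableM R _ f g p v df dg).
by rewrite (@deriveM R _ f g p v df dg) /GRing.scale /= addrC [g p * _]mulrC.
Qed.

Lemma cont_sp_aux (l : seq (fn * fn)) p :
  (forall x, List.In x l -> {for p, continuous x.1} /\ {for p, continuous x.2}) ->
  {for p, continuous (fun y => \sum_(x <- l) x.1 y * x.2 y)}.
Proof.
elim: l => [|a l IH] H.
  have -> : (fun y : 'rV[R]_N => \sum_(x <- [::] : seq (fn * fn)) x.1 y * x.2 y) = (fun _ => 0 : R).
    by apply/funext => x; rewrite big_nil.
  exact: cst_continuous.
have -> : (fun y : 'rV[R]_N => \sum_(x <- a :: l) x.1 y * x.2 y) =
  (fun y => a.1 y * a.2 y + \sum_(x <- l) x.1 y * x.2 y).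
  by apply/funext => x; rewrite big_cons.
apply: cont_add; last by apply: IH => x lx; apply: H; right.
have [s1 s2] := H a (or_introl erefl).
exact: cont_mul.
Qed.

Definition spfun (l : seq (fn * fn)) : fn :=
  fun p => \sum_(x <- l) x.1 p * x.2 p.

Lemma cont_sp (l : seq (fn * fn)) p :
  (forall x, List.In x l -> {for p, continuous x.1} /\ {for p, continuous x.2}) ->
  {for p, continuous (spfun l)}.
Proof. exact: cont_sp_aux. Qed.

Lemma sm_sp U (l : seq (fn * fn)) : open U ->
  (forall x, List.In x l -> smooth_on U x.1 /\ smooth_on U x.2) ->
  smooth_on U (spfun l).
Proof.
move=> oU Hl.
apply: (@good_smooth U (fun f => exists l, (forall x, List.In x l ->
    smooth_on U x.1 /\ smooth_on U x.2) /\ eqon U f (spfun l))) => //;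
  last by exists l; split.
split.
- move=> f [l' [Hl' fl']] p Up.
  have gf : eqon U (spfun l') f by move=> x Ux; rewrite fl'.
  have Hd : forall e x, List.In x l' -> derivable (fun y => x.1 y * x.2 y) p (dl R e).
    move=> e x /Hl' [s1 s2].
    by case: (derive_mul (sm_der (e:=e) s1 Up) (sm_der (e:=e) s2 Up)).
  split.
    apply: (eqon_cont oU Up gf); rewrite /spfun.
    apply: cont_sp => x /Hl' [s1 s2]; split; exact: sm_cont Up.
  move=> e; apply: (eqon_derivable oU Up gf).
  by case: (derive_bigsum (Hd e)).
- move=> f [l' [Hl' fl']] e.
  exists (spfun ([seq ('D_(dl R e) x.1, x.2) | x <- l'] ++
                 [seq (x.1, 'D_(dl R e) x.2) | x <- l'])).
  split.
    exists ([seq ('D_(dl R e) x.1, x.2) | x <- l'] ++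
                 [seq (x.1, 'D_(dl R e) x.2) | x <- l']); split => //.
    move=> x Hx; case: (List.in_app_or _ _ _ Hx) => /(List.in_map_iff _ _ _) [y [<- yl]] /=;
      have [s1 s2] := Hl' y yl.
      by split; [exact: (sm_D e s1) | exact: s2].
    by split; [exact: s1 | exact: (sm_D e s2)].
  move=> p Up.
  have gf : eqon U f (spfun l') by [].
  rewrite (eqon_derive _ oU Up gf) /spfun.
  have Hd : forall x, List.In x l' -> derivable (fun y => x.1 y * x.2 y) p (dl R e).
    move=> x /Hl' [s1 s2].
    by case: (derive_mul (sm_der (e:=e) s1 Up) (sm_der (e:=e) s2 Up)).
  have [_ ->] := derive_bigsum Hd.
  rewrite big_cat !big_map /= -big_split /=.
  apply: big_In => x /Hl' [s1 s2].
  by case: (derive_mul (sm_der (e:=e) s1 Up) (sm_der (e:=e) s2 Up)).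
Qed.
Lemma sm_mul U f g : open U -> smooth_on U f -> smooth_on U g ->
  smooth_on U (fun x => f x * g x).
Proof.
move=> oU sf sg.
apply: (@sm_ext U (spfun [:: (f, g)])).
  by move=> x; rewrite /spfun big_cons big_nil addr0.
apply: (sm_sp oU) => x [<-|[]]; split; [exact: sf | exact: sg].
Qed.

Lemma sm_add U f g : open U -> smooth_on U f -> smooth_on U g ->
  smooth_on U (fun x => f x + g x).
Proof.
move=> oU sf sg.
apply: (@sm_ext U (spfun [:: (f, fun _ => 1); (g, fun _ => 1)])).
  by move=> x; rewrite /spfun !big_cons big_nil addr0 !mulr1.
have s1 := @sm_cst U 1 oU.
apply: (sm_sp oU) => x [<-|[<-|[]]]; split; [exact: sf | exact: s1 | exact: sg | exact: s1].
Qed.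

Lemma sm_bigsum U (T : Type) (r : seq T) (F : T -> fn) : open U ->
  (forall i, smooth_on U (F i)) -> smooth_on U (fun x => \sum_(i <- r) F i x).
Proof.
move=> oU H; elim: r => [|a r IH].
  apply: (@sm_ext U (fun _ => 0)); first by move=> x; rewrite big_nil.
  exact: sm_cst.
apply: (@sm_ext U (fun x => F a x + \sum_(i <- r) F i x)).
  by move=> x; rewrite big_cons.
exact: (sm_add oU (H a) IH).
Qed.

Lemma sm_bigprod U (T : Type) (r : seq T) (F : T -> fn) : open U ->
  (forall i, smooth_on U (F i)) -> smooth_on U (fun x => \prod_(i <- r) F i x).
Proof.
move=> oU H; elim: r => [|a r IH].
  apply: (@sm_ext U (fun _ => 1)); first by move=> x; rewrite big_nil.
  exact: sm_cst.
apply: (@sm_ext U (fun x => F a x * \prod_(i <- r) F i x)).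
  by move=> x; rewrite big_cons.
exact: (sm_mul oU (H a) IH).
Qed.

Lemma derive_const_line f p v : (forall h : R, f (h *: v + p) = f p) ->
  derivable f p v /\ 'D_v f p = 0.
Proof.
move=> H.
have E : (fun h : R => h^-1 *: ((f \o shift p) (h *: v) - f p)) = (fun _ => 0).
  by apply/funext => h; rewrite /= H subrr scaler0.
rewrite /derivable /derive E; split; first exact: is_cvg_cst.
exact: lim_cst.
Qed.

End Smooth.

Section Comp.
Variables (R : realType) (N M : nat) (L : 'rV[R]_N -> 'rV[R]_M).
Hypothesis Llin : forall (a : R) x y, L (a *: x + y) = a *: L x + L y.

Lemma derive_lin (g : 'rV[R]_M -> R) p v :
  ('D_v (g \o L) p = 'D_(L v) g (L p)) /\ (derivable (g \o L) p v <-> derivable g (L p) (L v)).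
Proof.
have E : (fun h : R => h^-1 *: ((g \o L \o shift p) (h *: v) - (g \o L) p)) =
   (fun h : R => h^-1 *: ((g \o shift (L p)) (h *: L v) - g (L p))).
  by apply/funext => h; rewrite /= Llin.
by rewrite /derive /derivable E.
Qed.

Hypothesis Lcont : continuous L.
Hypothesis Ldelta : forall e, L (dl R e) = 0 \/ exists e', L (dl R e) = dl R e'.

Lemma sm_comp (U : set 'rV[R]_N) (U' : set 'rV[R]_M) (g : 'rV[R]_M -> R) :
  open U -> (forall p, U p -> U' (L p)) -> smooth_on U' g ->
  smooth_on U (g \o L).
Proof.
move=> oU LU sg.
apply: (@good_smooth R N U (fun f => (exists g, smooth_on U' g /\ f = g \o L)
   \/ f = fun _ => 0)) => //; last by left; exists g.
split.
- move=> f [[g' [sg' ->]]|->] p Up.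
    split.
      apply: continuous_comp; first exact: Lcont.
      exact: (sm_cont sg' (LU p Up)).
    move=> e; apply/(derive_lin g' p (dl R e)).2.
    case: (Ldelta e) => [->|[e' ->]]; first exact: derivable0.
    exact: sm_der sg' (LU p Up).
  split; first exact: cst_continuous.
  by move=> e; exact: derivable_cst.
- move=> f [[g' [sg' ->]]|->] e.
    case: (Ldelta e) => [E|[e' E]].
      exists (fun _ => 0); split; first by right.
      by move=> p Up; rewrite (derive_lin g' p (dl R e)).1 E derive0.
    exists ('D_(dl R e') g' \o L); split; first by left; exists ('D_(dl R e') g'); split; [exact: (sm_D e' sg') | reflexivity].
    by move=> p Up; rewrite (derive_lin g' p (dl R e)).1 E.
  exists (fun _ => 0); split; first by right.
  by move=> p Up; rewrite derive_cst.
Qed.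

End Comp.

Lemma row_norm_le (R : realType) N M (f : 'I_M -> 'I_N) (v : 'rV[R]_N) :
  `|\row_j v ord0 (f j)| <= `|v|.
Proof.
have v0 := normr_ge0 v.
move: v0; rewrite /Num.Def.normr /= !mx_normrE => v0.
apply: bigmax_le => //= -[i j] _ /=.
rewrite mxE.
apply: le_trans; last exact: (le_bigmax _ _ (ord0, f j)).
by [].
Qed.

Lemma row_cont (R : realType) N M (f : 'I_M -> 'I_N) :
  continuous (fun p : 'rV[R]_N => \row_j p ord0 (f j)).
Proof.
move=> p s /= /(nbhs_ballP) [e e0 es].
apply/nbhs_ballP; exists e => //= x px; apply: es.
move: px; rewrite !mx_norm_ball /ball_ /= => px.
apply: le_lt_trans px.
have -> : \row_j p ord0 (f j) - \row_j x ord0 (f j) = \row_j (p - x) ord0 (f j).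
  by apply/rowP => j; rewrite !mxE.
exact: row_norm_le.
Qed.

Section Coords.
Variables (n m : nat).

Lemma sum_count (J : seq 'I_n) : (\sum_(l < n) count_mem l J)%N = size J.
Proof.
elim: J => [|x J IH] /=; first by rewrite big1.
rewrite big_split /= IH (bigD1 x) //= eqxx big1 ?addn0 //.
by move=> l /negbTE; rewrite eq_sym => ->.
Qed.

Lemma val_mi_of k (J : seq 'I_n) : (size J <= k)%N ->
  forall l, (val (mi_of k J) l : nat) = count_mem l J.
Proof.
move=> sJ l; rewrite /mi_of insubdK ?ffunE ?inordK //.
  by rewrite ltnS (leq_trans _ sJ) // -sum_count (bigD1 l) //= leq_addr.
rewrite unfold_in /=.
rewrite (eq_bigr (fun l => count_mem l J)) ?sum_count // => i _.
by rewrite ffunE inordK // ltnS (leq_trans _ sJ) // -sum_count (bigD1 i) //= leq_addr.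
Qed.

Lemma mi_of_perm k (J J' : seq 'I_n) : perm_eq J J' -> mi_of k J = mi_of k J'.
Proof.
move=> pJ; rewrite /mi_of; congr insubd; apply/ffunP => l.
have /seq.permP pJ' := pJ.
by rewrite !ffunE pJ'.
Qed.

Lemma mi_of_size k (J J' : seq 'I_n) : (size J <= k)%N -> (size J' <= k)%N ->
  mi_of k J = mi_of k J' -> size J = size J'.
Proof.
move=> sJ sJ' E; rewrite -!sum_count.
by apply: eq_bigr => l _; rewrite -(val_mi_of sJ) -(val_mi_of sJ') E.
Qed.

Lemma val_emb_mi k l (a : mi n k) : (k <= l)%N ->
  forall i, (val (emb_mi l a) i : nat) = val a i.
Proof.
move=> kl i.
have H : forall j, (val a j < l.+1)%N.
  by move=> j; apply: (leq_trans (ltn_ord _)); rewrite ltnS.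
rewrite /emb_mi insubdK ?ffunE ?inordK //.
rewrite unfold_in /=.
rewrite (eq_bigr (fun j => nat_of_ord (val a j))) ?(leq_trans (valP a)) //.
by move=> j _; rewrite ffunE inordK.
Qed.

Lemma emb_mi_inj k l : (k <= l)%N -> injective (@emb_mi n k l).
Proof.
move=> kl a b E; apply: val_inj; apply/ffunP => i; apply: val_inj.
change (nat_of_ord (val a i) = nat_of_ord (val b i)).
by rewrite -(val_emb_mi a kl) -(val_emb_mi b kl) E.
Qed.

Lemma emb_mi_of k l (J : seq 'I_n) : (size J <= k)%N -> (k <= l)%N ->
  emb_mi l (mi_of k J) = mi_of l J.
Proof.
move=> sJ kl; apply: val_inj; apply/ffunP => i; apply: val_inj.
change (nat_of_ord (val (emb_mi l (mi_of k J)) i) = nat_of_ord (val (mi_of l J) i)).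
by rewrite (val_emb_mi _ kl) !val_mi_of // (leq_trans sJ).
Qed.

Lemma emb_mi_emb k l L (a : mi n k) : (k <= l)%N -> (l <= L)%N ->
  emb_mi L (emb_mi l a) = emb_mi L a.
Proof.
move=> kl lL; apply: val_inj; apply/ffunP => i; apply: val_inj.
change (nat_of_ord (val (emb_mi L (emb_mi l a)) i) = nat_of_ord (val (emb_mi L a) i)).
by rewrite !val_emb_mi // (leq_trans kl).
Qed.

Lemma emb_inj k l : (k <= l)%N -> injective (@emb n m k l).
Proof.
move=> kl [i|[s a]] [i'|[s' a']] //=; first by case=> ->.
by case=> -> /(emb_mi_inj kl) ->.
Qed.

Lemma emb_emb k l L (c : Defs.coord n m k) : (k <= l)%N -> (l <= L)%N ->
  emb L (emb l c) = emb L c.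
Proof. by move=> kl lL; case: c => [i|[s a]] //=; rewrite emb_mi_emb. Qed.

Variable R : realType.

Lemma cv_projk k l (p : pt R n m l) (c : Defs.coord n m k) :
  cv (projk k p) c = cv p (emb l c).
Proof. by rewrite /cv /projk mxE enum_rankK. Qed.

Lemma projk_lin k l (a : R) (x y : pt R n m l) :
  projk k (a *: x + y) = a *: projk k x + projk k y.
Proof. by apply/rowP => j; rewrite !mxE /cv !mxE. Qed.

Lemma projk_projk k l L (p : pt R n m L) : (k <= l)%N -> (l <= L)%N ->
  projk k (projk l p) = projk k p.
Proof. by move=> kl lL; apply/rowP => j; rewrite !mxE cv_projk emb_emb. Qed.

Lemma projk_ev k l (c : Defs.coord n m k) : (k <= l)%N ->
  projk k (ev R (emb l c)) = ev R c.
Proof.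
move=> kl; apply/rowP => j; rewrite !mxE /cv /ev !mxE /=.
congr (_%:R); congr (nat_of_bool _).
apply/idP/idP => [/eqP/enum_rank_inj/(emb_inj kl) E|/eqP ->].
  by rewrite -E enum_valK.
by rewrite enum_rankK.
Qed.

Lemma projk_dl k l (e : 'I_#|{: Defs.coord n m l}|) : (k <= l)%N ->
  projk k (dl R e) = 0 \/ exists e', projk k (dl R e) = dl R e'.
Proof.
move=> kl.
case: (pickP (fun c : Defs.coord n m k => emb l c == enum_val e)) => [c /eqP E|H].
  right; exists (enum_rank c).
  have -> : dl R e = ev R (emb l c) by rewrite /ev E enum_valK.
  by rewrite projk_ev.
left; apply/rowP => j; rewrite !mxE /cv /dl !mxE /=.
case: eqP => // /(congr1 enum_val); rewrite enum_rankK => E.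
by move: (H (enum_val j)); rewrite E eqxx.
Qed.

Lemma projk_cont k l : continuous (@projk R n m k l).
Proof. exact: row_cont. Qed.

Lemma domk_open k (W : set (pt R n m 0)) : open W -> open (@domk R n m k W).
Proof.
move=> oW; have hc : continuous (@projk R n m 0 k) by exact: row_cont.
have := (continuousP (@projk R n m 0 k)).1 hc W oW.
by [].
Qed.

Lemma domk_projk k l (W : set (pt R n m 0)) (p : pt R n m l) : (k <= l)%N ->
  @domk R n m l W p -> @domk R n m k W (projk k p).
Proof. by move=> kl; rewrite /domk /= projk_projk. Qed.

Lemma cv_shift k (p : pt R n m k) (c c' : Defs.coord n m k) (h : R) :
  cv (h *: ev R c + p) c' = h * (c == c')%:R + cv p c'.
Proof.
rewrite /cv /ev !mxE /=.
by rewrite (inj_eq enum_rank_inj) eq_sym.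
Qed.

End Coords.

Definition insert (T : Type) (k : nat) (x : T) (s : seq T) := take k s ++ x :: drop k s.

Lemma insert0 (T : Type) (x : T) s : insert 0 x s = x :: s.
Proof. by rewrite /insert take0 drop0. Qed.

Lemma insertS (T : Type) k (x y : T) s : insert k.+1 x (y :: s) = y :: insert k x s.
Proof. by []. Qed.

Lemma size_insert (T : Type) k (x : T) s : (k <= size s)%N -> size (insert k x s) = (size s).+1.
Proof.
move=> ks; rewrite /insert size_cat /= size_takel // size_drop.
by rewrite addnS subnKC.
Qed.

Lemma nth_insert (T : Type) (x0 : T) k x s : (k <= size s)%N -> nth x0 (insert k x s) k = x.
Proof. by move=> ks; rewrite /insert nth_cat size_takel // ltnn subnn. Qed.

Lemma dropi_insert (T : Type) k (x : T) s : (k <= size s)%N -> dropi k (insert k x s) = s.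
Proof.
move=> ks; rewrite /dropi /insert take_cat size_takel // ltnn subnn take0 cats0.
rewrite drop_cat size_takel // ltnNge leqnSn /= subSn // subnn /= drop0.
exact: cat_take_drop.
Qed.

Lemma zip_insert (A B : Type) k (a : A) (b : B) s t : size s = size t ->
  zip (insert k a s) (insert k b t) = insert k (a, b) (zip s t).
Proof.
elim: s k t => [|x s IH] k [|y t] //= E.
case: k => [|k]; first by rewrite !insert0.
by rewrite !insertS /= IH //; case: E.
Qed.

Lemma big_insert (R : comRingType) (T : Type) (F : T -> R) k x s :
  \prod_(u <- insert k x s) F u = F x * \prod_(u <- s) F u.
Proof.
rewrite /insert big_cat /= big_cons mulrCA.
by rewrite -big_cat cat_take_drop.
Qed.

Section Ssum.
Variable R : realType.

Fixpoint ssum (T : finType) (N : nat) (G : seq T -> R) : R :=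
  if N is N'.+1 then \sum_(x : T) ssum N' (fun t => G (x :: t)) else G [::].

Lemma ssum_tuple (T : finType) N (G : seq T -> R) :
  \sum_(t : N.-tuple T) G t = ssum N G.
Proof.
elim: N G => [|N IH] G /=.
  rewrite (eq_bigr (fun _ => G [::])); last by move=> t _; rewrite tuple0.
  by rewrite sumr_const card_tuple expn0.
transitivity (\sum_(x : T) \sum_(t : N.-tuple T) G (x :: t)); last first.
  by apply: eq_bigr => x _; rewrite (IH (fun t => G (x :: t))).
rewrite pair_big /=.
rewrite (reindex (fun p : T * N.-tuple T => [tuple of p.1 :: p.2])) /=.
  by [].
exists (fun t : N.+1.-tuple T => (thead t, [tuple of behead t])).
  by move=> [x t] _ /=; rewrite theadE; congr pair; apply: val_inj.
by move=> t _; rewrite [t in RHS]tuple_eta.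
Qed.

Lemma ssum_ext (T : finType) N (G G' : seq T -> R) :
  (forall t, size t = N -> G t = G' t) -> ssum N G = ssum N G'.
Proof.
elim: N G G' => [|N IH] G G' H /=; first exact: H.
apply: eq_bigr => x _; apply: IH => t st; apply: H => /=; by rewrite st.
Qed.

Lemma ssum_add (T : finType) N (G G' : seq T -> R) :
  ssum N (fun t => G t + G' t) = ssum N G + ssum N G'.
Proof.
elim: N G G' => [|N IH] G G' //=.
by rewrite -big_split /=; apply: eq_bigr => x _; rewrite IH.
Qed.

Lemma ssum_mull (T : finType) N (c : R) (G : seq T -> R) :
  ssum N (fun t => c * G t) = c * ssum N G.
Proof.
elim: N G => [|N IH] G //=.
by rewrite mulr_sumr; apply: eq_bigr => x _; rewrite IH.
Qed.

Lemma ssum_mulr (T : finType) N (c : R) (G : seq T -> R) :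
  ssum N (fun t => G t * c) = ssum N G * c.
Proof.
rewrite mulrC -ssum_mull; apply: ssum_ext => t _; exact: mulrC.
Qed.

Lemma ssum0 (T : finType) N : ssum N (fun _ : seq T => 0) = 0.
Proof. by elim: N => [|N IH] //=; rewrite big1. Qed.

Lemma ssum_sum (T : finType) (I : Type) (r : seq I) N (F : I -> seq T -> R) :
  ssum N (fun t => \sum_(x <- r) F x t) = \sum_(x <- r) ssum N (F x).
Proof.
elim: r => [|a r IH].
  transitivity (ssum N (fun _ : seq T => 0)); first by apply: ssum_ext => t _; rewrite big_nil.
  by rewrite ssum0 big_nil.
rewrite big_cons -IH -ssum_add; apply: ssum_ext => t _; by rewrite big_cons.
Qed.

Lemma ssum_ins (T : finType) k N (G : seq T -> R) : (k <= N)%N ->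
  ssum N.+1 G = \sum_(x : T) ssum N (fun t => G (insert k x t)).
Proof.
elim: k N G => [|k IH] N G kN.
  by rewrite /=; apply: eq_bigr => x _; apply: ssum_ext => t _; rewrite insert0.
case: N kN => [//|N] kN.
transitivity (\sum_(y : T) ssum N.+1 (fun t => G (y :: t))); first by [].
rewrite (eq_bigr (fun y => \sum_(x : T) ssum N (fun t => G (y :: insert k x t)))); last first.
  by move=> y _; rewrite (IH N (fun t => G (y :: t))).
rewrite exchange_big /=; apply: eq_bigr => x _.
by apply: eq_bigr => y _.
Qed.

Lemma big_zip_iota (X : Type) (x0 : X) (F : nat * X -> R) m (s : seq X) :
  \sum_(u <- zip (iota m (size s)) s) F u = \sum_(k < size s) F (m + k, nth x0 s k)%N.
Proof.
elim: s m => [|a s IH] m /=; first by rewrite big_nil big_ord0.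
rewrite big_cons big_ord_recl /= addn0 IH.
by congr (_ + _); apply: eq_bigr => k _; rewrite addSnnS.
Qed.

End Ssum.

Section Eps.
Variables (R : realType) (n : nat).

Lemma size_map_enum (P : 'S_n) : size (map P (enum 'I_n)) = n.
Proof. by rewrite size_map size_enum_ord. Qed.

Lemma eps_size (t : seq 'I_n) : size t != n -> eps R t = 0.
Proof.
move=> st; rewrite /eps big1 // => P _.
case: eqP => [E|_]; last by rewrite mul0r.
by move: st; rewrite -E size_map_enum eqxx.
Qed.

Lemma eps_swap l1 (x y : 'I_n) l2 :
  eps R (l1 ++ x :: y :: l2) = - eps R (l1 ++ y :: x :: l2).
Proof.
have [sE|sN] := eqVneq (size (l1 ++ x :: y :: l2)) n; last first.
  rewrite !eps_size ?oppr0 //.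
  by move: sN; rewrite !size_cat.
set k := size l1.
have kn : (k.+1 < n)%N by rewrite -sE size_cat /= !addnS !ltnS leq_addr.
have kn1 : (k < n)%N by apply: ltnW.
pose a := Ordinal kn1; pose b := Ordinal kn.
pose tau := tperm a b.
have ab : a != b by rewrite -val_eqE /= (ltn_eqF (ltnSn k)).
set e := enum 'I_n.
have se : size e = n by rewrite size_enum_ord.
have Na : nth a e k = a by exact: (nth_ord_enum a a).
have Nb : nth a e k.+1 = b by exact: (nth_ord_enum a b).
have F1 : e = take k e ++ a :: b :: drop k.+2 e.
  rewrite -{1}(cat_take_drop k e); congr (_ ++ _).
  by rewrite (drop_nth a) ?se // (drop_nth a) ?se // Na Nb.
have ue : uniq (take k e ++ a :: b :: drop k.+2 e) by rewrite -F1 enum_uniq.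
move: ue; rewrite cat_uniq /= => /and3P [_ H1 /and3P [H2 H3 _]].
move: H1; rewrite negb_or => /andP [aT /norP [bT _]].
move: H2; rewrite inE negb_or => /andP [_ aD].
have Ftake : map tau (take k e) = take k e.
  apply: map_id_in => z zT; rewrite /tau tpermD //.
    by apply: contraNneq aT => ->.
  by apply: contraNneq bT => ->.
have Fdrop : map tau (drop k.+2 e) = drop k.+2 e.
  apply: map_id_in => z zT; rewrite /tau tpermD //.
    by apply: contraNneq aD => ->.
  by apply: contraNneq H3 => ->.
have Me : forall P : 'S_n, map (tau * P)%g e = map P (take k e) ++ P b :: P a :: map P (drop k.+2 e).
  move=> P; rewrite (eq_map (g := P \o tau)); last by move=> i; rewrite /= permM.
  rewrite map_comp.
  have -> : map tau e = take k e ++ b :: a :: drop k.+2 e.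
    by rewrite {1}F1 map_cat /= Ftake Fdrop /tau tpermL tpermR.
  by rewrite map_cat.
have Me' : forall P : 'S_n, map P e = map P (take k e) ++ P a :: P b :: map P (drop k.+2 e).
  by move=> P; rewrite {1}F1 map_cat.
have sT : forall P : 'S_n, size (map P (take k e)) = k.
  by move=> P; rewrite size_map size_takel // se ltnW.
rewrite /eps (reindex_inj (mulgI tau)) /= -sumrN; apply: eq_bigr => P _.
rewrite odd_permM odd_tperm ab signr_addb /= Me Me'.
rewrite !eqseq_cat ?sT // !eqseq_cons.
rewrite [X in _ && X]andbCA.
by rewrite expr1 mulN1r mulrN.
Qed.

Lemma eps_move l1 (x : 'I_n) l2 :
  eps R (l1 ++ x :: l2) = (-1) ^+ size l1 * eps R (x :: l1 ++ l2).
Proof.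
elim/last_ind: l1 l2 => [|l a IH] l2; first by rewrite expr0 mul1r.
by rewrite !cat_rcons eps_swap IH size_rcons exprS mulN1r mulNr.
Qed.

End Eps.

Lemma map_insert (A B : Type) (f : A -> B) k x s :
  map f (insert k x s) = insert k (f x) (map f s).
Proof. by rewrite /insert map_cat /= map_take map_drop. Qed.

Lemma sign_sq (R : realType) k : (-1) ^+ k * (-1) ^+ k = 1 :> R.
Proof. by rewrite -exprMn mulrNN mulr1 expr1n. Qed.

Lemma sgn_cancel (R : realType) (x f e p : R) : x * x = 1 -> (x * f) * ((x * e) * p) = f * (e * p).
Proof. move=> h; transitivity ((x * x) * (f * (e * p))); first ring. by rewrite h mul1r. Qed.

Lemma sgn_cancel2 (R : realType) (x g X : R) : x * x = 1 -> x * g * (x * X) = g * X.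
Proof. move=> h; transitivity ((x * x) * (g * X)); first ring. by rewrite h mul1r. Qed.

Section Comb.
Variables (R : realType) (n m q : nat) (Y : 'I_m -> seq 'I_n -> R).

Definition Pi (sg : seq 'I_m) (I : seq (seq 'I_n)) (t : seq 'I_n) : R :=
  \prod_(u <- zip sg (zip I t)) Y u.1 (rcons u.2.1 u.2.2).
Definition hj sg I i :=
  \sum_(t : (size sg).-tuple 'I_n) eps R (t ++ i) * Pi sg I t.
Definition Hj (j : 'I_n) sg I i :=
  \sum_(t : (size sg).-tuple 'I_n) eps R (j :: t ++ i) * Pi sg I t.

Lemma eps_ins_r (t : seq 'I_n) k j i : (k <= size i)%N ->
  eps R (t ++ insert k j i) = (-1) ^+ (size t + k) * eps R (j :: t ++ i).
Proof.
move=> ki; rewrite /insert catA eps_move size_cat size_takel //.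
by rewrite -catA cat_take_drop.
Qed.

Lemma eps_ins_l (t : seq 'I_n) k j i : (k <= size t)%N ->
  eps R (insert k j t ++ i) = (-1) ^+ k * eps R (j :: t ++ i).
Proof.
move=> kt; rewrite /insert -catA /= eps_move size_takel //.
by rewrite catA cat_take_drop.
Qed.

Lemma Pi_insert k sg I t a J b : size sg = size I -> size I = size t ->
  Pi (insert k a sg) (insert k J I) (insert k b t) = Y a (rcons J b) * Pi sg I t.
Proof.
move=> s1 s2; rewrite /Pi (zip_insert k J b s2).
have s3 : size sg = size (zip I t) by rewrite size_zip -s2 minnn s1.
by rewrite (zip_insert k a (J, b) s3) big_insert.
Qed.

Lemma hj_ssum sg I i : hj sg I i = ssum (size sg) (fun t => eps R (t ++ i) * Pi sg I t).
Proof. by rewrite /hj (ssum_tuple _ (fun t => eps R (t ++ i) * Pi sg I t)). Qed.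

Lemma Hj_ssum j sg I i : Hj j sg I i = ssum (size sg) (fun t => eps R (j :: t ++ i) * Pi sg I t).
Proof. by rewrite /Hj (ssum_tuple _ (fun t => eps R (j :: t ++ i) * Pi sg I t)). Qed.

Lemma L2_lemma s N (sg : seq 'I_m) (I : seq (seq 'I_n)) (F : 'I_n -> seq 'I_n -> R) :
  size sg = s -> (s + N.+1 = n)%N ->
  ssum N.+1 (fun i => (\sum_(u <- zip (iota 0 (size i)) i)
        (-1) ^+ (s + u.1) * F u.2 (dropi u.1 i)) * hj sg I i)
  = N.+1%:R * ssum N (fun i' => \sum_(j < n) F j i' * Hj j sg I i').
Proof.
move=> ssg sn; subst s.
have n0 : (0 < n)%N by rewrite -sn addnS.
pose j0 : 'I_n := Ordinal n0.
rewrite (ssum_ext (G' := fun i => \sum_(k < N.+1)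
    (-1) ^+ (size sg + k) * F (nth j0 i k) (dropi k i) * hj sg I i)); last first.
  move=> i si.
  rewrite (big_zip_iota j0 (fun u => (-1) ^+ (size sg + u.1) * F u.2 (dropi u.1 i))) si.
  by rewrite big_distrl.
rewrite ssum_sum.
rewrite (eq_bigr (fun _ => ssum N (fun i' => \sum_(j < n) F j i' * Hj j sg I i'))); last first.
  move=> k _.
  have kN : (k <= N)%N by rewrite -ltnS.
  rewrite (ssum_ins _ kN) -ssum_sum; apply: ssum_ext => i' si'.
  apply: eq_bigr => j _.
  rewrite nth_insert ?si' // dropi_insert ?si' //.
  rewrite /hj /Hj !mulr_sumr; apply: eq_bigr => t _.
  rewrite eps_ins_r ?si' // size_tuple.
  by rewrite sgn_cancel // sign_sq.
by rewrite sumr_const card_ord mulr_natl.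
Qed.

Lemma hj_insert k a J sg (I : seq (seq 'I_n)) i :
  (forall a J j, Y a (rcons J j) = Y a (j :: J)) ->
  size sg = size I -> (k <= size sg)%N ->
  hj (insert k a sg) (insert k J I) i = (-1) ^+ k * \sum_(j < n) Y a (j :: J) * Hj j sg I i.
Proof.
move=> HY sI ks.
rewrite hj_ssum size_insert // (ssum_ins _ ks) mulr_sumr; apply: eq_bigr => b _.
rewrite Hj_ssum -ssum_mull -ssum_mull; apply: ssum_ext => t st.
rewrite eps_ins_l ?st // Pi_insert ?st // HY.
ring.
Qed.

Lemma L1_lemma s' N (G : 'I_m -> seq 'I_n -> seq 'I_m -> seq (seq 'I_n) -> seq 'I_n -> R) :
  (forall a J j, Y a (rcons J j) = Y a (j :: J)) ->
  ssum s'.+1 (fun sg : seq 'I_m => ssum s'.+1 (fun I : seq (q.-tuple 'I_n) => ssum N (fun i : seq 'I_n =>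
    (\sum_(u <- zip (iota 0 (size sg)) (zip sg (map val I)))
        (-1) ^+ u.1 * G u.2.1 u.2.2 (dropi u.1 sg) (dropi u.1 (map val I)) i) * hj sg (map val I) i)))
  = s'.+1%:R * ssum s' (fun sg' : seq 'I_m => ssum s' (fun I' : seq (q.-tuple 'I_n) => ssum N (fun i =>
      \sum_(j < n) \sum_(a : 'I_m) \sum_(J : q.-tuple 'I_n)
          Y a (j :: J) * G a J sg' (map val I') i * Hj j sg' (map val I') i))).
Proof.
move=> HY.
have [m0|mpos] := posnP m.
  have E0 : forall (F : 'I_m -> R), \sum_(a : 'I_m) F a = 0.
    move=> F; rewrite big1 // => -[a am] _; exfalso.
    by have := am; rewrite m0.
  transitivity (0 : R); first by rewrite [LHS]/= E0.
  rewrite (ssum_ext (G' := fun _ => 0)) ?ssum0 ?mulr0 // => sg' _.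
  rewrite (ssum_ext (G' := fun _ => 0)) ?ssum0 // => I' _.
  rewrite (ssum_ext (G' := fun _ => 0)) ?ssum0 // => i _.
  by rewrite big1 // => j _; exact: E0.
pose a0 : 'I_m := Ordinal mpos.
pose T (k : nat) sg (I : seq (q.-tuple 'I_n)) i := (-1) ^+ k *
  G (nth a0 sg k) (nth [::] (map val I) k) (dropi k sg) (dropi k (map val I)) i *
  hj sg (map val I) i.
rewrite (ssum_ext (G' := fun sg => \sum_(k < s'.+1) ssum s'.+1 (fun I => ssum N (T k sg I)))); last first.
  move=> sg ssg; rewrite -ssum_sum; apply: ssum_ext => I sI; rewrite -ssum_sum.
  apply: ssum_ext => i si.
  have E : size sg = size (zip sg (map val I)) by rewrite size_zip size_map ssg sI minnn.
  rewrite {1}E (big_zip_iota (a0, [::]) (fun u => (-1) ^+ u.1 *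
      G u.2.1 u.2.2 (dropi u.1 sg) (dropi u.1 (map val I)) i)) -E ssg big_distrl.
  apply: eq_bigr => k _; rewrite nth_zip ?size_map ?ssg ?sI //.
rewrite ssum_sum.
rewrite (eq_bigr (fun _ => ssum s' (fun sg' : seq 'I_m => ssum s' (fun I' : seq (q.-tuple 'I_n) => ssum N (fun i =>
      \sum_(j < n) \sum_(a : 'I_m) \sum_(J : q.-tuple 'I_n)
          Y a (j :: J) * G a J sg' (map val I') i * Hj j sg' (map val I') i))))); last first.
  move=> k _.
  have ks : (k <= s')%N by rewrite -ltnS.
  transitivity (\sum_(a : 'I_m) ssum s' (fun sg' => \sum_(J : q.-tuple 'I_n) ssum s' (fun I' : seq (q.-tuple 'I_n) =>
      ssum N (fun i => G a J sg' (map val I') i * \sum_(j < n) Y a (j :: J) * Hj j sg' (map val I') i)))).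
    rewrite (ssum_ins _ ks); apply: eq_bigr => a _; apply: ssum_ext => sg' ssg'.
    rewrite (ssum_ins _ ks); apply: eq_bigr => J _; apply: ssum_ext => I' sI'.
    apply: ssum_ext => i si.
    unfold T; rewrite map_insert.
    have e1 : nth a0 (insert k a sg') k = a by apply: nth_insert; rewrite ssg'.
    have e2 : nth [::] (insert k (val J) (map val I')) k = val J.
      by apply: nth_insert; rewrite size_map sI'.
    have e3 : dropi k (insert k a sg') = sg' by apply: dropi_insert; rewrite ssg'.
    have e4 : dropi k (insert k (val J) (map val I')) = map val I'.
      by apply: dropi_insert; rewrite size_map sI'.
    have e5 : hj (insert k a sg') (insert k (val J) (map val I')) i =
        (-1) ^+ k * \sum_(j < n) Y a (j :: val J) * Hj j sg' (map val I') i.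
      by apply: hj_insert => //; rewrite ?size_map ?ssg' ?sI'.
    rewrite e1 e2 e3 e4 e5.
    by rewrite sgn_cancel2 // sign_sq.
  rewrite -ssum_sum; apply: ssum_ext => sg' _.
  symmetry.
  transitivity (ssum s' (fun I' : seq (q.-tuple 'I_n) => ssum N (fun i =>
     \sum_(a : 'I_m) \sum_(J : q.-tuple 'I_n)
        (G a J sg' (map val I') i * \sum_(j < n) Y a (j :: J) * Hj j sg' (map val I') i)))).
    apply: ssum_ext => I' _; apply: ssum_ext => i _.
    rewrite exchange_big; apply: eq_bigr => a _.
    rewrite exchange_big; apply: eq_bigr => J _.
    rewrite mulr_sumr; apply: eq_bigr => j _.
    by rewrite mulrCA mulrA.
  rewrite (ssum_ext (G' := fun I' : seq (q.-tuple 'I_n) => \sum_(a : 'I_m) \sum_(J : q.-tuple 'I_n)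
      ssum N (fun i => G a J sg' (map val I') i * \sum_(j < n) Y a (j :: J) * Hj j sg' (map val I') i))); last first.
    move=> I' _; rewrite ssum_sum; apply: eq_bigr => a _; by rewrite ssum_sum.
  rewrite ssum_sum; apply: eq_bigr => a _; by rewrite ssum_sum.
by rewrite sumr_const card_ord mulr_natl.
Qed.

End Comb.

Section DD.
Variables (R : realType) (N : nat) (P v : 'rV[R]_N).
Local Notation fn := ('rV[R]_N -> R).

Definition DD (f : fn) (d : R) := derivable f P v /\ 'D_v f P = d.

Lemma DD_sum (T : Type) (r : seq T) (F : T -> fn) (D : T -> R) :
  (forall x, DD (F x) (D x)) -> DD (fun y => \sum_(x <- r) F x y) (\sum_(x <- r) D x).
Proof.
move=> H.
have [d e] := derive_bigsum (r := r) (F := F) (p := P) (v := v) (fun x _ => (H x).1).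
split => //; rewrite e; apply: eq_bigr => x _; exact: (H x).2.
Qed.

Lemma DD_scal (c : R) f d : DD f d -> DD (fun y => c * f y) (c * d).
Proof.
move=> [df <-].
have dc : derivable (fun _ : 'rV[R]_N => c) P v by exact: derivable_cst.
have [d1 e1] := derive_mul dc df.
split => //; by rewrite e1 derive_cst mul0r add0r.
Qed.

Lemma DD_mulc f g d : DD f d -> (forall h : R, g (h *: v + P) = g P) ->
  DD (fun y => f y * g y) (d * g P).
Proof.
move=> [df <-] Hg.
have [dg eg] := derive_const_line Hg.
have [d1 e1] := derive_mul df dg.
by split => //; rewrite e1 eg mulr0 addr0.
Qed.

Lemma DD_eq f d d' : d = d' -> DD f d -> DD f d'.
Proof. by move=> ->. Qed.

End DD.

Lemma mem_zip2 (A B : eqType) (s : seq A) (t : seq B) u : u \in zip s t -> u.2 \in t.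
Proof.
elim: s t => [|a s IH] [|b t] //=; rewrite in_cons => /orP [/eqP -> /=|H].
  by rewrite eqxx.
by rewrite (IH _ H) orbT.
Qed.

Lemma mem_zip1 (A B : eqType) (s : seq A) (t : seq B) u : u \in zip s t -> u.1 \in s.
Proof.
elim: s t => [|a s IH] [|b t] //=; rewrite in_cons => /orP [/eqP -> /=|H].
  by rewrite eqxx.
by rewrite (IH _ H) orbT.
Qed.

Lemma emb_yc (n m k l : nat) (a : 'I_m) (J : seq 'I_n) : (size J <= k)%N -> (k <= l)%N ->
  emb l (yc k a J) = yc l a J.
Proof. by move=> sJ kl; rewrite /yc /= emb_mi_of. Qed.

Lemma yc_neq (n m k : nat) (a a' : 'I_m) (J L : seq 'I_n) : (size J <= k)%N -> size L = k ->
  size J != k -> yc k a J != yc k a' L.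
Proof.
move=> sJ sL nJ; apply/eqP => -[_ /mi_of_size E].
by move: nJ; rewrite E ?sL // => /eqP.
Qed.

Section Main.
Variables (R : realType) (n m q : nat) (W : set (pt R n m 0)) (A : Afam R n m q).
Hypothesis oW : open W.
Hypothesis HA : forall (s : nat) (sg : s.-tuple 'I_m) (I : s.-tuple (q.-tuple 'I_n))
     (i : (n.-1 - s).-tuple 'I_n), (s < n)%N ->
     smooth_on (@domk R n m q W) (A sg (map val I) i).

Definition Ycv (P : pt R n m q.+1) : 'I_m -> seq 'I_n -> R := fun a J => cv P (yc q.+1 a J).
Definition Hf (j : 'I_n) sg I i (P : pt R n m q.+1) : R := @Hj R n m (Ycv P) j sg I i.
Definition cs (s : nat) : R := ((s`! * (n.-1 - s)`!)%:R)^-1.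
Definition Vf (j : 'I_n) (P : pt R n m q.+1) : R :=
  \sum_(s < n) cs s * \sum_(sg : s.-tuple 'I_m) \sum_(I : s.-tuple (q.-tuple 'I_n))
     \sum_(i : (n.-1 - s).-tuple 'I_n) A sg (map val I) i (projk q P) * Hf j sg (map val I) i P.

Lemma Hf_smooth j sg I i : smooth_on (@domk R n m q.+1 W) (Hf j sg I i).
Proof.
have oU := @domk_open n m R q.+1 W oW.
rewrite /Hf /Hj /Pi /Ycv /cv.
apply: sm_bigsum => // t.
apply: sm_mul => //; first exact: sm_cst.
apply: sm_bigprod => // u.
exact: sm_coord.
Qed.

Lemma Vf_smooth j : smooth_on (@domk R n m q.+1 W) (Vf j).
Proof.
have oU := @domk_open n m R q.+1 W oW.
rewrite /Vf.
apply: sm_bigsum => // s.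
apply: sm_mul => //; first exact: sm_cst.
apply: sm_bigsum => // sg; apply: sm_bigsum => // I; apply: sm_bigsum => // i.
apply: sm_mul => //; last exact: Hf_smooth.
apply: (@sm_comp R _ _ (@projk R n m q q.+1) (fun a x y => @projk_lin n m R q q.+1 a x y)
   (@row_cont R _ _ _) (fun e => @projk_dl n m R q q.+1 e (leqnSn q))
   _ (@domk R n m q W) (A sg (map val I) i) oU).
  by move=> p Up; apply: domk_projk.
exact: HA.
Qed.

Lemma Hf_const j sg (I : seq (q.-tuple 'I_n)) i (c : Defs.coord n m q.+1) h P :
  (forall a L, size L = q.+1 -> c != yc q.+1 a L) ->
  Hf j sg (map val I) i (h *: ev R c + P) = Hf j sg (map val I) i P.
Proof.
move=> Hc; rewrite /Hf /Hj /Pi /Ycv; apply: eq_bigr => t _; congr (_ * _).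
apply: eq_big_seq => u uin.
rewrite cv_shift.
have /mem_zip1 : u.2 \in zip (map val I) t by exact: mem_zip2 uin.
case/mapP => J _ EJ.
have -> : (c == yc q.+1 u.1 (rcons u.2.1 u.2.2)) = false.
  by apply/negbTE/Hc; rewrite size_rcons EJ size_tuple.
by rewrite mulr0 add0r.
Qed.

Lemma pd_Vf j (P : pt R n m q.+1) (c0 : Defs.coord n m q) :
  @domk R n m q.+1 W P ->
  (forall a L, size L = q.+1 -> emb q.+1 c0 != yc q.+1 a L) ->
  pd (emb q.+1 c0) (Vf j) P =
  \sum_(s < n) cs s * \sum_(sg : s.-tuple 'I_m) \sum_(I : s.-tuple (q.-tuple 'I_n))
     \sum_(i : (n.-1 - s).-tuple 'I_n)
        pd c0 (A sg (map val I) i) (projk q P) * Hf j sg (map val I) i P.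
Proof.
move=> DP Hc.
suff : DD P (ev R (emb q.+1 c0)) (Vf j) (\sum_(s < n) cs s * \sum_(sg : s.-tuple 'I_m) \sum_(I : s.-tuple (q.-tuple 'I_n))
     \sum_(i : (n.-1 - s).-tuple 'I_n)
        pd c0 (A sg (map val I) i) (projk q P) * Hf j sg (map val I) i P) by case.
apply: DD_sum => s; apply: DD_scal.
apply: DD_sum => sg; apply: DD_sum => I; apply: DD_sum => i.
apply: DD_mulc; last by move=> h; apply: Hf_const.
have DP0 : @domk R n m q W (projk q P) by apply: domk_projk.
have der : derivable (A sg (map val I) i) (projk q P) (ev R c0).
  exact: (sm_der (e := enum_rank c0) (HA sg I i (ltn_ord s)) DP0).
have [E1 E2] := derive_lin (fun a x y => @projk_lin n m R q q.+1 a x y)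
   (A sg (map val I) i) P (ev R (emb q.+1 c0)).
rewrite (@projk_ev n m R q q.+1 c0 (leqnSn q)) in E1 E2.
split; first exact: E2.2 der.
exact: E1.
Qed.

Definition Lf j P (f : seq 'I_m -> seq (seq 'I_n) -> seq 'I_n -> R) : R :=
  \sum_(s < n) cs s * \sum_(sg : s.-tuple 'I_m) \sum_(I : s.-tuple (q.-tuple 'I_n))
     \sum_(i : (n.-1 - s).-tuple 'I_n) f sg (map val I) i * Hf j sg (map val I) i P.

Lemma Lf_add j P f g : Lf j P (fun a b c => f a b c + g a b c) = Lf j P f + Lf j P g.
Proof.
rewrite /Lf -big_split /=; apply: eq_bigr => s _; rewrite -mulrDr; congr (_ * _).
rewrite -big_split /=; apply: eq_bigr => sg _.
rewrite -big_split /=; apply: eq_bigr => I _.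
rewrite -big_split /=; apply: eq_bigr => i _.
by rewrite mulrDl.
Qed.

Lemma Lf_scal j P (c : R) f : Lf j P (fun a b d => c * f a b d) = c * Lf j P f.
Proof.
rewrite /Lf mulr_sumr; apply: eq_bigr => s _; rewrite mulrCA; congr (_ * _).
rewrite mulr_sumr; apply: eq_bigr => sg _.
rewrite mulr_sumr; apply: eq_bigr => I _.
rewrite mulr_sumr; apply: eq_bigr => i _.
by rewrite mulrA.
Qed.

Lemma Lf0 j P : Lf j P (fun _ _ _ => 0) = 0.
Proof.
rewrite /Lf big1 // => s _; rewrite big1 ?mulr0 // => sg _.
rewrite big1 // => I _; rewrite big1 // => i _; by rewrite mul0r.
Qed.

Lemma Lf_sum j P (T : Type) (r : seq T) (F : T -> seq 'I_m -> seq (seq 'I_n) -> seq 'I_n -> R) :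
  Lf j P (fun a b d => \sum_(x <- r) F x a b d) = \sum_(x <- r) Lf j P (F x).
Proof.
elim: r => [|x r IH].
  rewrite big_nil; transitivity (Lf j P (fun _ _ _ => 0)); last exact: Lf0.
  by congr (Lf _ _ _); apply/funext => a; apply/funext => b; apply/funext => d; rewrite big_nil.
rewrite big_cons -IH -Lf_add; congr (Lf _ _ _).
by apply/funext => a; apply/funext => b; apply/funext => d; rewrite big_cons.
Qed.

Lemma fd_Vf j (p : pt R n m q.+2) : @domk R n m q.+2 W p ->
  fd j (Vf j) p = Lf j (projk q.+1 p) (fun sg I i =>
     pd (xc m q j) (A sg I i) (projk q (projk q.+1 p)) +
     \sum_(a < q.+1) \sum_(t : 'I_m) \sum_(J : a.-tuple 'I_n)
        Ycv (projk q.+1 p) t (j :: J) * pdJ t J (A sg I i) (projk q (projk q.+1 p))).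
Proof.
move=> Dp.
set P := projk q.+1 p.
have DP : @domk R n m q.+1 W P by apply: domk_projk.
rewrite Lf_add /fd; congr (_ + _).
  have -> : xc m q.+1 j = emb q.+1 (xc m q j) by [].
  by rewrite pd_Vf.
rewrite Lf_sum; apply: eq_bigr => a _.
rewrite Lf_sum; apply: eq_bigr => t _.
rewrite Lf_sum; apply: eq_bigr => J _.
rewrite Lf_scal; congr (_ * _).
  rewrite /Ycv /P cv_projk emb_yc //= size_tuple.
  by rewrite ltnS -ltnS ltn_ord.
have sJ : (size J <= q)%N by rewrite size_tuple -ltnS ltn_ord.
rewrite /pdJ -(emb_yc t sJ (leqnSn q)) pd_Vf //; last first.
  move=> a' L sL; rewrite emb_yc //; apply: yc_neq => //.
    exact: (leq_trans sJ).
  by rewrite neq_ltn ltnS sJ.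
by rewrite Lf_scal.
Qed.

End Main.

Lemma S3_ssum (R : realType) n m q s N (F : seq 'I_m -> seq (seq 'I_n) -> seq 'I_n -> R) :
  \sum_(sg : s.-tuple 'I_m) \sum_(I : s.-tuple (q.-tuple 'I_n)) \sum_(i : N.-tuple 'I_n)
     F sg (map val I) i
  = ssum s (fun sg => ssum s (fun I : seq (q.-tuple 'I_n) => ssum N (fun i => F sg (map val I) i))).
Proof.
transitivity (\sum_(sg : s.-tuple 'I_m) ssum s (fun I : seq (q.-tuple 'I_n) =>
   ssum N (fun i => F sg (map val I) i))).
  apply: eq_bigr => sg _.
  rewrite -(ssum_tuple _ (fun I : seq (q.-tuple 'I_n) => ssum N (fun i => F sg (map val I) i))).
  apply: eq_bigr => I _.
  by rewrite -(ssum_tuple _ (fun i => F sg (map val I) i)).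
by rewrite (ssum_tuple _ (fun sg => ssum s (fun I : seq (q.-tuple 'I_n) =>
   ssum N (fun i => F sg (map val I) i)))).
Qed.

Lemma coef_a (R : realType) n s : (s < n)%N ->
  ((s`! * (n - s)`!)%:R)^-1 * (n - s)%:R = ((s`! * (n.-1 - s)`!)%:R)^-1 :> R.
Proof.
move=> sn.
have -> : (n - s = (n.-1 - s).+1)%N by case: n sn => // n' sn; rewrite /= subSn.
set k := (n.-1 - s)%N.
rewrite factS !natrM.
have h1 : (s`!)%:R != 0 :> R by rewrite pnatr_eq0 -lt0n fact_gt0.
have h2 : (k`!)%:R != 0 :> R by rewrite pnatr_eq0 -lt0n fact_gt0.
have h3 : (k.+1)%:R != 0 :> R by rewrite pnatr_eq0.
by field; rewrite h1 h2 /= addrC natr1 pnatr_eq0.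
Qed.

Lemma coef_b (R : realType) n s : 
  ((s.+1`! * (n - s.+1)`!)%:R)^-1 * (s.+1)%:R = ((s`! * (n.-1 - s)`!)%:R)^-1 :> R.
Proof.
have -> : (n - s.+1 = n.-1 - s)%N by rewrite subnS -subn1 subnAC subn1.
set k := (n.-1 - s)%N.
rewrite factS !natrM.
have h1 : (s`!)%:R != 0 :> R by rewrite pnatr_eq0 -lt0n fact_gt0.
have h2 : (k`!)%:R != 0 :> R by rewrite pnatr_eq0 -lt0n fact_gt0.
have h3 : (s.+1)%:R != 0 :> R by rewrite pnatr_eq0.
by field; rewrite h1 h2 /= addrC natr1 pnatr_eq0.
Qed.


Section Final.
Variables (R : realType) (n m q : nat) (W : set (pt R n m 0)) (A : Afam R n m q).
Hypothesis HA : forall (s : nat) (sg : s.-tuple 'I_m) (I : s.-tuple (q.-tuple 'I_n))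
     (i : (n.-1 - s).-tuple 'I_n), (s < n)%N ->
     smooth_on (@domk R n m q W) (A sg (map val I) i).
Variable p : pt R n m q.+2.
Hypothesis Dp : @domk R n m q.+2 W p.

Definition Fd (j : 'I_n) sg I i := fd j (A sg I i) (projk q.+1 p).
Definition Gd (a : 'I_m) (J : seq 'I_n) sg I i := pdJ a J (A sg I i) (projk q (projk q.+1 p)).

Definition Xs (s : nat) : R := ssum s (fun sg : seq 'I_m => ssum s (fun I : seq (q.-tuple 'I_n) =>
   ssum (n.-1 - s) (fun i =>
   \sum_(j < n) Fd j sg (map val I) i * Hj (Ycv (projk q.+1 p)) j sg (map val I) i))).
Definition Ys (s : nat) : R := ssum s (fun sg : seq 'I_m => ssum s (fun I : seq (q.-tuple 'I_n) =>
   ssum (n.-1 - s) (fun i =>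
   \sum_(j < n) \sum_(a : 'I_m) \sum_(J : q.-tuple 'I_n)
     Ycv (projk q.+1 p) a (j :: J) * Gd a J sg (map val I) i *
     Hj (Ycv (projk q.+1 p)) j sg (map val I) i))).

Lemma RHS_eq : \sum_(j < n) fd j (Vf A j) p = \sum_(s < n) cs R n s * (Xs s + Ys s).
Proof.
rewrite (eq_bigr (fun j => Lf j (projk q.+1 p) (fun sg I i => Fd j sg I i +
    \sum_(a : 'I_m) \sum_(J : q.-tuple 'I_n) Ycv (projk q.+1 p) a (j :: J) * Gd a J sg I i))); last first.
  move=> j _; rewrite (fd_Vf HA j Dp); congr (Lf _ _ _).
  apply/funext => sg; apply/funext => I; apply/funext => i.
  by rewrite /Fd /Gd /fd big_ord_recr /= addrA.
rewrite /Lf exchange_big; apply: eq_bigr => s _ /=.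
rewrite -mulr_sumr; congr (_ * _).
transitivity (\sum_(sg : s.-tuple 'I_m) \sum_(I : s.-tuple (q.-tuple 'I_n))
     \sum_(i : (n.-1 - s).-tuple 'I_n) \sum_(j < n)
     (Fd j sg (map val I) i + \sum_(a : 'I_m) \sum_(J : q.-tuple 'I_n)
        Ycv (projk q.+1 p) a (j :: J) * Gd a J sg (map val I) i) *
      Hf j sg (map val I) i (projk q.+1 p)).
  rewrite exchange_big; apply: eq_bigr => sg _.
  rewrite exchange_big; apply: eq_bigr => I _.
  by rewrite exchange_big.
rewrite (@S3_ssum R n m q s (n.-1 - s) (fun sg I i => \sum_(j < n)
     (Fd j sg I i + \sum_(a : 'I_m) \sum_(J : q.-tuple 'I_n)
        Ycv (projk q.+1 p) a (j :: J) * Gd a J sg I i) *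
      Hf j sg I i (projk q.+1 p))).
rewrite /Xs /Ys -ssum_add; apply: ssum_ext => sg _.
rewrite -ssum_add; apply: ssum_ext => I _.
rewrite -ssum_add; apply: ssum_ext => i _.
rewrite -big_split; apply: eq_bigr => j _ /=.
rewrite mulrDl; congr (_ + _).
rewrite mulr_suml; apply: eq_bigr => a _.
by rewrite mulr_suml.
Qed.

Definition S1 sg I i := \sum_(u <- zip (iota 0 (size sg)) (zip sg I))
   (-1) ^+ u.1 * Gd u.2.1 u.2.2 (dropi u.1 sg) (dropi u.1 I) i.
Definition S2 sg I i := \sum_(u <- zip (iota 0 (size i)) i)
   (-1) ^+ (size sg + u.1) * Fd u.2 sg I (dropi u.1 i).
Definition cL (s : nat) : R := ((s`! * (n - s)`!)%:R)^-1.
Definition L1s (s : nat) : R := ssum s (fun sg : seq 'I_m => ssum s (fun I : seq (q.-tuple 'I_n) =>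
   ssum (n - s) (fun i => S1 sg (map val I) i * hj (Ycv (projk q.+1 p)) sg (map val I) i))).
Definition L2s (s : nat) : R := ssum s (fun sg : seq 'I_m => ssum s (fun I : seq (q.-tuple 'I_n) =>
   ssum (n - s) (fun i => S2 sg (map val I) i * hj (Ycv (projk q.+1 p)) sg (map val I) i))).

Lemma Lag_split : Lag A (projk q.+1 p) = \sum_(s < n.+1) cL s * (L1s s + L2s s).
Proof.
rewrite /Lag; apply: eq_bigr => s _; congr (_ * _).
rewrite (@S3_ssum R n m q s (n - s) (fun sg I i =>
   Lcal A sg I i (projk q.+1 p) * hjac sg I i (projk q.+1 p))).
rewrite /L1s /L2s -ssum_add; apply: ssum_ext => sg _.
rewrite -ssum_add; apply: ssum_ext => I _.
rewrite -ssum_add; apply: ssum_ext => i _.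
by rewrite -mulrDl.
Qed.

Lemma L2_part : \sum_(s < n.+1) cL s * L2s s = \sum_(s < n) cs R n s * Xs s.
Proof.
rewrite big_ord_recr /=.
have -> : L2s n = 0.
  rewrite /L2s subnn.
  rewrite (ssum_ext (G' := fun _ => 0)) ?ssum0 // => sg _.
  rewrite (ssum_ext (G' := fun _ => 0)) ?ssum0 // => I _ /=.
  by rewrite /S2 /= big_nil mul0r.
rewrite mulr0 addr0; apply: eq_bigr => s _.
have sn := ltn_ord s.
have E : (n - s = (n.-1 - s).+1)%N by move: sn; clear; lia.
have sn' : (s + (n.-1 - s).+1 = n)%N by move: sn; clear; lia.
rewrite /L2s E.
rewrite (ssum_ext (G' := fun sg => (n.-1 - s).+1%:R * ssum s (fun I : seq (q.-tuple 'I_n) =>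
    ssum (n.-1 - s) (fun i' => \sum_(j < n) Fd j sg (map val I) i' *
       Hj (Ycv (projk q.+1 p)) j sg (map val I) i')))).
  by rewrite ssum_mull mulrA -E /cL coef_a.
move=> sg ssg; rewrite -ssum_mull; apply: ssum_ext => I _.
rewrite /S2 ssg.
exact: (@L2_lemma R n m (Ycv (projk q.+1 p)) s (n.-1 - s) sg (map val I)
   (fun j i' => Fd j sg (map val I) i') ssg sn').
Qed.

Lemma HY : forall (a : 'I_m) (J : seq 'I_n) (j : 'I_n),
  Ycv (projk q.+1 p) a (rcons J j) = Ycv (projk q.+1 p) a (j :: J).
Proof.
move=> a J j; rewrite /Ycv /yc (@mi_of_perm n q.+1 (rcons J j) (j :: J)) //.
by rewrite perm_rcons perm_refl.
Qed.

Lemma L1_part : \sum_(s < n.+1) cL s * L1s s = \sum_(s < n) cs R n s * Ys s.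
Proof.
rewrite big_ord_recl.
have -> : L1s 0 = 0.
  rewrite /L1s /=.
  rewrite (ssum_ext (G' := fun _ => 0)) ?ssum0 // => i _.
  by rewrite /S1 /= big_nil mul0r.
rewrite mulr0 add0r; apply: eq_bigr => s _.
rewrite lift0.
have E : (n - s.+1 = n.-1 - s)%N by clear; lia.
rewrite /L1s /S1 (@L1_lemma R n m q (Ycv (projk q.+1 p)) s (n - s.+1) Gd HY).
by rewrite mulrA /cL coef_b E.
Qed.

Lemma LHS_eq : Lag A (projk q.+1 p) = \sum_(s < n) cs R n s * (Xs s + Ys s).
Proof.
rewrite Lag_split.
transitivity (\sum_(s < n.+1) cL s * L1s s + \sum_(s < n.+1) cL s * L2s s).
  by rewrite -big_split; apply: eq_bigr => s _; rewrite mulrDr.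
rewrite L1_part L2_part -big_split; apply: eq_bigr => s _ /=.
by rewrite mulrDr addrC.
Qed.

End Final.

Unset Implicit Arguments.

Theorem mainTheorem5 (R : realType) (n m q : nat) (W : set (pt R n m 0))
  (A : Afam R n m q) :
  open W ->
  (* smoothness of the A's on V^{r-1} *)
  (forall (s : nat) (sg : s.-tuple 'I_m) (I : s.-tuple (q.-tuple 'I_n))
     (i : (n.-1 - s).-tuple 'I_n), (s < n)%N ->
     smooth_on (@domk R n m q W) (A sg (map val I) i)) ->
  (* symmetry property *)
  (forall (s : nat) (sg : s.-tuple 'I_m) (I : s.-tuple (q.-tuple 'I_n))
     (i : (n.-1 - s).-tuple 'I_n) (P : 'S_s) (Q : 'S_(n.-1 - s)) (p : pt R n m q),
     (s < n)%N -> (@domk R n m q W) p ->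
     A (permt P sg) (map val (permt P I)) (permt Q i) p
       = (-1) ^+ (odd_perm P (+) odd_perm Q) * A sg (map val I) i p) ->
  exists V : 'I_n -> pt R n m q.+1 -> R,
    (forall j, smooth_on (@domk R n m q.+1 W) (V j)) /\
    forall p : pt R n m q.+2, (@domk R n m q.+2 W) p ->
      Lag A (projk q.+1 p) = \sum_(j < n) fd j (V j) p.
Proof.
move=> oW HA _.
exists (Vf A); split; first by move=> j; exact: (Vf_smooth oW HA j).
move=> p Dp.
by rewrite LHS_eq (RHS_eq HA Dp).
Qed.
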